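(* For every integer $k\ge0$ there exist symmetric polynomials $\phi_i^k(y_1,\dots,y_i)$ for $1\le i\le k+2$ and symmetric polynomials $\varphi_j^k(y_1,\dots,y_j)$ for $2\le j\le k+2$ such that $$\phi_1^k=1,\quad\phi_{k+1}^k=1,\quad\phi_{k+2}^k=0,\qquad \varphi_2^k(y_1,y_2)=\sum_{i=0}^ky_1^iy_2^{k-i},\quad\varphi_{k+2}^k=1,$$ and for every $1\le i\le k+1$, $$\phi_i^k(y_1,\dots,y_i)\,y_{i+1}^{k+2-i}-\varphi_{i+1}^k(y_1,\dots,y_{i+1})\,y_{i+1}=-\phi_{i+1}^k(y_1,\dots,y_{i+1})\,y_1y_2\cdots y_{i+1}.$$
   Context: A symmetric polynomial in variables $y_1,\dots,y_n$ is a polynomial (with real coefficients) invariant under every permutation of the variables. *)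

(* Defs.v *)
From Stdlib Require Import Reals.
From HB Require Import structures.
From mathcomp Require Import all_boot all_order all_algebra.
From mathcomp Require Import Rstruct.
From mathcomp.multinomials Require Import mpoly.
Set Implicit Arguments. Unset Strict Implicit. Unset Printing Implicit Defensive.
Import Order.TTheory GRing.Theory Num.Theory.
Local Open Scope ring_scope.

(* Real coefficients: Stdlib's R (a realType via Rstruct).
   A polynomial in variables y_1..y_n is an element of {mpoly R[n]},
   variable y_(j+1) being 'X_j for j : 'I_n. *)

(* The embedding {mpoly R[n]} -> {mpoly R[n.+1]} (y_i |-> y_i) is mpoly's mwiden. *)

(* Main.v *)
From Stdlib Require Import Reals.
From HB Require Import structures.
From mathcomp Require Import all_boot all_order all_algebra.
From mathcomp Require Import Rstruct.
From mathcomp Require Import fingroup perm zify.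
From mathcomp.multinomials Require Import mpoly.
Import Order.TTheory GRing.Theory Num.Theory.
Set Implicit Arguments. Unset Strict Implicit. Unset Printing Implicit Defensive.
Local Open Scope ring_scope.

Section Arith.
Local Open Scope nat_scope.
Lemma sum_le_miss n (f : 'I_n.+1 -> nat) c k :
  (forall i, f i <= c) -> f k = 0 -> \sum_i f i <= n * c.
Proof.
move=> H Hk; rewrite (bigD1 k) //= Hk add0n.
apply: (@leq_trans (\sum_(i | i != k) c)); first exact: leq_sum.
by rewrite sum_nat_const cardC1 card_ord.
Qed.

Lemma sum_sub1 n (f : 'I_n -> nat) :
  (forall i, 0 < f i) -> \sum_i f i = \sum_i (f i - 1) + n.
Proof.
move=> H; rewrite -[in X in _ = _ + X](card_ord n) -sum1_card -big_split /=.
by apply: eq_bigr => i _; rewrite subnK.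
Qed.

Lemma arith n a (f : 'I_n.+1 -> nat) x :
  [&& 0 < x, \sum_i f i + (x - 1) == n.+1 * a.+1, [forall i, f i <= a.+1] & x - 1 <= a.+1]
  = [&& a.+1 < x, x - a.+2 == 0, \sum_i f i == n * a.+1 & [forall i, f i <= a.+1]]
    || [&& [forall i, 0 < f i], 0 < x,
           \sum_i (f i - 1) + (x - 1) == n.+1 * a,
           [forall i, f i - 1 <= a] & x - 1 <= a].
Proof.
set S := \sum_i f i; set A := [forall i, f i <= a.+1].
have EA : [forall i, f i - 1 <= a] = A.
  by apply/eq_forallb => i; rewrite leq_subLR add1n.
rewrite EA.
set T := \sum_(i < n.+1) (f i - 1).
set P := [forall i, 0 < f i].
have HT : P -> S = T + n.+1 by move/forallP => Pos; rewrite /S /T (sum_sub1 Pos).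
have HM : ~~ P -> A -> S <= n * a.+1.
  move=> /forallPn [k]; rewrite lt0n negbK => /eqP Hk /forallP HA.
  exact: (sum_le_miss (c := a.+1) HA Hk).
clear EA; clearbody S T P A.
case: P HT HM => HT HM; case: A HM => HM; rewrite /= ?andbF ?andbT ?orbF.
all: try (have {}HT := HT isT); try (have {}HM := HM isT isT).
all: apply/idP/idP; nia.
Qed.

End Arith.

Section Gen.
Variable K : ringType.

Lemma mcoeffMXgen n (p : {mpoly K[n]}) (u m : 'X_{1..n}) :
  (p * 'X_[u])@_m = if (u <= m)%MM then p@_(m - u)%MM else 0.
Proof.
case: ifP => h.
  by rewrite -{1}(submK h) addmC mcoeffMX.
rewrite mcoeffM big1 // => k /eqP mk.
rewrite mcoeffX; case: eqP => [ek|]; last by rewrite mulr0.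
suff: (u <= m)%MM by rewrite h.
by apply/mnm_lepP=> i; rewrite mk -ek mnmDE leq_addl.
Qed.

Definition mrestr n (m : 'X_{1..n.+1}) : 'X_{1..n} :=
  [multinom m (widen_ord (leqnSn n) i) | i < n].

Lemma mcoeff_mwiden n (q : {mpoly K[n]}) (m : 'X_{1..n.+1}) :
  (mwiden q)@_m = if m ord_max == 0%N then q@_(mrestr m) else 0.
Proof.
case: ifP => h.
  have e : m = mnmwiden (mrestr m).
    apply/mnmP => i; case: (ltnP i n) => hi.
      have -> : i = widen_ord (leqnSn n) (Ordinal hi) by apply/val_inj.
      by rewrite mnmwiden_widen mnmE.
    have -> : i = ord_max by apply/val_inj; apply/eqP; rewrite eqn_leq hi -ltnS ltn_ord.
    by rewrite mnmwiden_ordmax (eqP h).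
  by rewrite [in LHS]e mwiden_mnmwiden.
rewrite (mwidenE (k := msize q)) // raddf_sum big1 // => k _.
rewrite /= mcoeffZ mcoeffX; case: eqP => [e|]; last by rewrite mulr0.
by move: h; rewrite -e mnmwiden_ordmax.
Qed.

Definition cnd n a (m : 'X_{1..n}) : bool :=
  (mdeg m == n.-1 * a)%N && [forall i, (m i <= a)%N].

Definition Phi n a : {mpoly K[n]} :=
  \sum_(m : 'X_{1..n < (n.-1 * a).+1} | cnd a m) 'X_[m].

Lemma mcoeffPhi n a m : (Phi n a)@_m = (cnd a m)%:R.
Proof.
rewrite raddf_sum /=.
under eq_bigr do rewrite mcoeffX.
case: (ltnP (mdeg m) (n.-1 * a).+1) => h.
  rewrite big_mkcond (bigD1 (Sub m h : 'X_{1..n < (n.-1 * a).+1})) //=.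
  rewrite big1 ?addr0; first by case: (cnd a m); rewrite ?eqxx.
  move=> j hj; case: (cnd a j) => //; case: eqP => // e.
  by case/negP: hj; apply/eqP/val_inj => /=; exact: e.
rewrite big1; last first.
  move=> j hj; case: eqP => // e; move: (bmdeg j); rewrite e => hh.
  by move: h; rewrite leqNgt hh.
suff -> : cnd a m = false by [].
by rewrite /cnd; case: eqP => // e; move: h; rewrite e ltnn.
Qed.

Lemma Phi_sym n a : Phi n a \is symmetric.
Proof.
apply/issymP => s; apply/mpolyP => m; rewrite mcoeff_sym !mcoeffPhi.
congr (_%:R); rewrite /cnd mdeg_mperm; congr (_ && _).
apply/forallP/forallP => H i.
  by have := H (s^-1 i)%g; rewrite mnmE permKV.
by rewrite mnmE; apply: H.
Qed.

Lemma ord_split n (P : 'I_n.+1 -> Prop) :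
  (forall i : 'I_n, P (widen_ord (leqnSn n) i)) -> P ord_max -> forall i, P i.
Proof.
move=> H1 H2 i; case: (ltnP i n) => hi.
  by have -> : i = widen_ord (leqnSn n) (Ordinal hi) by apply/val_inj.
by have -> : i = ord_max by apply/val_inj; apply/eqP; rewrite eqn_leq hi -ltnS ltn_ord.
Qed.

Lemma forall_split n (p : 'I_n.+1 -> bool) :
  [forall i, p i] = [forall i : 'I_n, p (widen_ord (leqnSn n) i)] && p ord_max.
Proof.
apply/forallP/andP => [H|[/forallP H1 H2]]; first by split => //; apply/forallP.
exact: ord_split.
Qed.

Lemma mdeg_split n (m : 'X_{1..n.+1}) :
  mdeg m = (\sum_(i < n) m (widen_ord (leqnSn n) i) + m ord_max)%N.
Proof. by rewrite mdegE big_ord_recr. Qed.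

Lemma cnd_splitE n c (m : 'X_{1..n.+2}) g y :
  (forall i, m (widen_ord (leqnSn _) i) = g i) -> m ord_max = y ->
  cnd c m = [&& (\sum_i g i + y == n.+1 * c)%N, [forall i, g i <= c]%N & (y <= c)%N].
Proof.
move=> Hg Hy; rewrite /cnd mdeg_split forall_split Hy.
rewrite (eq_bigr g) //; congr [&& _, _ & _].
by apply/eq_forallb => i; rewrite Hg.
Qed.

Lemma cnd_restrE n c (m : 'X_{1..n.+2}) g :
  (forall i, m (widen_ord (leqnSn _) i) = g i) ->
  cnd c (mrestr m) = (\sum_i g i == n * c)%N && [forall i, g i <= c]%N.
Proof.
move=> Hg; rewrite /cnd mdegE /=.
rewrite (eq_bigr g); last by move=> i _; rewrite mnmE Hg.
by congr (_ && _); apply/eq_forallb => i; rewrite mnmE Hg.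
Qed.

Lemma lepUn n (i : 'I_n) k (m : 'X_{1..n}) : (U_(i) *+ k <= m)%MM = (k <= m i)%N.
Proof.
apply/mnm_lepP/idP => [H|H j]; first by have := H i; rewrite mulmnE mnm1E eqxx mul1n.
by rewrite mulmnE mnm1E; case: eqP => [<-|]; rewrite ?mul1n ?mul0n.
Qed.

Lemma ones_val n (j : 'I_n) : ((\sum_(i < n) U_(i))%MM j = 1)%N.
Proof.
rewrite mnm_sumE (bigD1 j) //= mnm1E eqxx big1 ?addn0 // => i /negbTE h.
by rewrite mnm1E h.
Qed.

Lemma lepU n (i : 'I_n) (m : 'X_{1..n}) : (U_(i) <= m)%MM = (0 < m i)%N.
Proof.
apply/mnm_lepP/idP => [H|H j]; first by have := H i; rewrite mnm1E eqxx.
by rewrite mnm1E; case: eqP => [<-|].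
Qed.

Lemma lep_ones n (m : 'X_{1..n}) : ((\sum_(j < n) U_(j)) <= m)%MM = [forall j, 0 < m j]%N.
Proof.
by apply/mnm_lepP/forallP => H j; [have := H j | ]; rewrite ones_val // H.
Qed.

Lemma max_widenF n (i : 'I_n) : (ord_max == widen_ord (leqnSn n) i) = false.
Proof. by rewrite -(inj_eq val_inj) /= eq_sym ltn_eqF. Qed.

Lemma ifR (b c : bool) : (if b then c%:R else 0 : K) = (b && c)%:R.
Proof. by case: b. Qed.

Lemma orR (b c : bool) : ~~ (b && c) -> ((b || c)%:R : K) = b%:R + c%:R.
Proof. by case: b; case: c => //=; rewrite ?addr0 ?add0r. Qed.

Lemma Phi_rec n a :
  Phi n.+2 a.+1 * 'X_(ord_max) =
  mwiden (Phi n.+1 a.+1) * 'X_(ord_max) ^+ a.+2 + Phi n.+2 a * \prod_(j < n.+2) 'X_j.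
Proof.
apply/mpolyP => m; rewrite mcoeffD mpolyXn (mprodXE _ (fun j => U_(j)%MM)).
rewrite !mcoeffMXgen mcoeff_mwiden !mcoeffPhi lepUn lep_ones.
set f := fun i => m (widen_ord (leqnSn _) i).
rewrite (@cnd_splitE _ _ _ f (m ord_max - 1)%N); first last.
- by rewrite mnmBE mnm1E eqxx.
- by move=> i; rewrite mnmBE mnm1E max_widenF subn0.
rewrite lepU mnmBE mulmnE mnm1E eqxx mul1n.
rewrite (@cnd_restrE _ _ _ f); last first.
  by move=> i; rewrite mnmBE mulmnE mnm1E max_widenF mul0n subn0.
rewrite (@cnd_splitE _ _ _ (fun i => f i - 1)%N (m ord_max - 1)%N); first last.
- by rewrite mnmBE ones_val.
- by move=> i; rewrite mnmBE ones_val.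
rewrite (forall_split (fun j : 'I_n.+2 => 0 < m j)%N).
change [forall i : 'I_n.+1, (0 < m (widen_ord (leqnSn n.+1) i))%N] with [forall i, (0 < f i)%N].
move: (m ord_max) => x; clearbody f.
rewrite !ifR -[in X in _ + X]andbA (@arith n a f x) orR //.
apply/negP => /andP [/and4P [h1 /eqP h _ _] /and5P [_ _ _ _ h2]].
move: h1 h h2; clear; move=> h1 h h2; lia.
Qed.

Lemma Phi_one n a : (n.-1 * a = 0)%N -> Phi n a = 1.
Proof.
move=> h; apply/mpolyP => m; rewrite mcoeffPhi mcoeff1.
suff -> : cnd a m = (m == 0%MM) by [].
rewrite /cnd h mdeg_eq0; case: eqP => //= ->.
by apply/forallP => i; rewrite mnm0E.
Qed.

Lemma Phi2 k : Phi 2 k = \sum_(i < k.+1) 'X_(0 : 'I_2) ^+ i * 'X_(1 : 'I_2) ^+ (k - i).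
Proof.
apply/mpolyP => m; rewrite mcoeffPhi raddf_sum /=.
under eq_bigr => i _ do rewrite !mpolyXn -mpolyXD mcoeffX.
have m01 : mdeg m = (m (0%R : 'I_2) + m (1%R : 'I_2))%N.
  by rewrite mdegE !big_ord_recl big_ord0 addn0; congr (m _ + m _)%N; apply/val_inj.
have key : forall i : 'I_k.+1,
    ((U_(0%R : 'I_2) *+ i + U_(1%R : 'I_2) *+ (k - i))%MM == m)
    = (m (0%R : 'I_2) == i) && (m (0%R : 'I_2) + m (1%R : 'I_2) == k)%N.
  move=> i; have hi := ltn_ord i; rewrite ltnS in hi.
  apply/eqP/andP => [<-|[/eqP h0 /eqP h1]].
    rewrite !mnmDE !mulmnE !mnm1E /=; split; apply/eqP; lia.
  apply/mnmP => j; rewrite !mnmDE !mulmnE !mnm1E.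
  case: j => -[|[|//]] hj.
    have -> : Ordinal hj = (0%R : 'I_2) by apply/val_inj.
    by rewrite eqxx /= h0; lia.
  have -> : Ordinal hj = (1%R : 'I_2) by apply/val_inj.
  by rewrite eqxx /=; lia.
under eq_bigr => i _ do rewrite key.
have -> : cnd k m = (m (0%R : 'I_2) + m (1%R : 'I_2) == k)%N.
  rewrite /cnd m01 /= mul1n; case: eqP => //= h.
  apply/forallP => -[[|[|//]] hj].
    have -> : Ordinal hj = (0%R : 'I_2) by apply/val_inj.
    lia.
  have -> : Ordinal hj = (1%R : 'I_2) by apply/val_inj.
  lia.
case: eqP => h; last by rewrite big1 // => i _; rewrite andbF.
have hm : (m (0%R : 'I_2) < k.+1)%N by lia.
rewrite (bigD1 (Ordinal hm)) //= eqxx big1 ?addr0 // => i hi.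
rewrite andbT; case: eqP => // e; case/negP: hi.
by apply/eqP/val_inj => /=; rewrite e.
Qed.
End Gen.

Theorem mainTheorem18 (k : nat) :
  exists (phi varphi : forall i : nat, {mpoly R[i]}),
    (forall i : nat, (1 <= i <= k.+2)%N -> phi i \is symmetric) /\
    (forall j : nat, (2 <= j <= k.+2)%N -> varphi j \is symmetric) /\
    phi 1%N = 1 /\ phi k.+1 = 1 /\ phi k.+2 = 0 /\
    varphi 2%N = \sum_(i < k.+1) ('X_(0 : 'I_2) ^+ i * 'X_(1 : 'I_2) ^+ (k - i)) /\
    varphi k.+2 = 1 /\
    (forall i : nat, (1 <= i <= k.+1)%N ->
       mwiden (phi i) * 'X_(ord_max : 'I_i.+1) ^+ (k.+2 - i)
         - varphi i.+1 * 'X_(ord_max : 'I_i.+1)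
       = - (phi i.+1 * \prod_(j < i.+1) 'X_j)).
Proof.
exists (fun i => if i == k.+2 then 0 else Phi R i (k.+1 - i)).
exists (fun j => Phi R j (k.+2 - j)).
split; first by move=> i _; case: eqP => _; [exact: rpred0 | exact: Phi_sym].
split; first by move=> j _; exact: Phi_sym.
split; first by rewrite /= Phi_one.
split; first by rewrite /= (_ : (k.+1 == k.+2) = false) ?Phi_one ?subnn ?muln0 //; lia.
split; first by rewrite eqxx.
split; first by rewrite subSS subSS subn0 Phi2.
split; first by rewrite subnn Phi_one ?muln0.
case=> [//|n] /andP [_ hn] /=.
have e1 : (n.+1 == k.+2) = false by lia.
rewrite e1 !subSS.
have e2 : (k.+1 - n = (k - n).+1)%N by lia.
rewrite e2.
case e: (k - n)%N => [|b].
  have -> : (n.+2 == k.+2) = true by lia.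
  rewrite (@Phi_one _ _ 0) ?muln0 // (@Phi_one _ _ 0) ?muln0 //.
  by rewrite mwiden1 expr1 !mul1r subrr mul0r oppr0.
have -> : (n.+2 == k.+2) = false by lia.
have -> : (k - n.+1 = b)%N by lia.
by rewrite Phi_rec opprD addrA subrr add0r.
Qed.
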